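(* Let $M$ be a Coxeter diagram over $I$ with no subdiagram of type $\mathsf{A}_3$ and let $\Gamma=(V,\tau,* )$ be a geometry over $I$ satisfying Properties (F), (P) and (D). Let $X$ be a flag of $\Gamma$ (possibly empty) and $i\in I\setminus\tau(X)$. Form $\Gamma'=(V\cup\{x\},\tau,* )$ by adding a single new element $x$ of type $i$, incident exactly with the elements of $X$ and with all elements $v\in V$ whose type is different from $i$ and not adjacent to $i$ in $M$ (incidences among elements of $V$ unchanged). Then $\Gamma'$ satisfies Properties (F), (P) and (D), and $X\cup\{x\}$ is a flag of $\Gamma'$.
   Context: A geometry over $I$ is a triple $(V,\tau,* )$ with $\tau:V\to I$ and $*$ a symmetric relation such that elements of equal type are incident iff equal. A flag is a set of pairwise incident elements; the residue of a flag $X$ is the geometry formed by the elements outside $X$ incident with all of $X$. Coxeter diagram $M$ with matrix $(m_{i,j})$; nodes $i\ne j$ are adjacent iff $m_{i,j}\ge3$; a subdiagram of type $\mathsf{A}_3$ is three nodes $i,j,k$ with $m_{i,j}=m_{j,k}=3$, $m_{i,k}=2$. A rank 2 geometry (bipartite incidence graph) is without $k$-gons if it has no cycle of length $2k$. (F) Elements of distinct non-adjacent types are always incident. (P) For adjacent nodes $i,j$ and any flag $X$ of type $J$ with $i,j\notin J$ containing a vertex of every node of $I\setminus\{i,j\}$ adjacent to $i$ or $j$, the restriction of the residue of $X$ to types $i,j$ has no $t$-gons for $t<m_{i,j}$. (D) If $m_{i,j}\ge4$, the restriction of the geometry to types $i$ and $j$ has no digons. *)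

(* Defs.v *)
From Stdlib Require Import Arith.
Set Implicit Arguments.
Unset Strict Implicit.

(* Coxeter matrix entries: [Some n] is the integer n, [None] is infinity. *)
Definition entry := option nat.

Definition lt_entry (t : nat) (e : entry) : Prop :=
  match e with Some n => t < n | None => True end.
Definition ge_entry (e : entry) (n : nat) : Prop :=
  match e with Some k => n <= k | None => True end.

Definition coxeter_diagram (I : Type) (m : I -> I -> entry) : Prop :=
  (forall i, m i i = Some 1) /\
  (forall i j, m i j = m j i) /\
  (forall i j, i <> j -> ge_entry (m i j) 2).

Definition adjacent (I : Type) (m : I -> I -> entry) (i j : I) : Prop :=
  i <> j /\ ge_entry (m i j) 3.

Definition no_A3 (I : Type) (m : I -> I -> entry) : Prop :=
  ~ (exists i j k : I, m i j = Some 3 /\ m j k = Some 3 /\ m i k = Some 2).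

Definition geometry (I V : Type) (tau : V -> I) (inc : V -> V -> Prop) : Prop :=
  (forall u v, inc u v -> inc v u) /\
  (forall u v, tau u = tau v -> (inc u v <-> u = v)).

Definition flag (V : Type) (inc : V -> V -> Prop) (X : V -> Prop) : Prop :=
  forall u v, X u -> X v -> inc u v.

(* A t-gon (t >= 2) among the elements satisfying S: a cycle of length 2t
   in the incidence graph restricted to S. *)
Definition has_ngon (V : Type) (inc : V -> V -> Prop) (S : V -> Prop) (t : nat) : Prop :=
  2 <= t /\
  exists f : nat -> V,
    (forall a b, a < 2 * t -> b < 2 * t -> f a = f b -> a = b) /\
    (forall a, a < 2 * t -> S (f a)) /\
    (forall a, a < 2 * t -> inc (f a) (f ((a + 1) mod (2 * t)))).

Definition residue_ij (I V : Type) (tau : V -> I) (inc : V -> V -> Prop)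
    (X : V -> Prop) (i j : I) (v : V) : Prop :=
  ~ X v /\ (forall w, X w -> inc v w) /\ (tau v = i \/ tau v = j).

Definition propF (I V : Type) (m : I -> I -> entry) (tau : V -> I)
    (inc : V -> V -> Prop) : Prop :=
  forall u v, tau u <> tau v -> ~ adjacent m (tau u) (tau v) -> inc u v.

Definition propP (I V : Type) (m : I -> I -> entry) (tau : V -> I)
    (inc : V -> V -> Prop) : Prop :=
  forall (i j : I) (X : V -> Prop),
    adjacent m i j ->
    flag inc X ->
    (forall w, X w -> tau w <> i /\ tau w <> j) ->
    (forall k, k <> i -> k <> j -> (adjacent m i k \/ adjacent m j k) ->
       exists w, X w /\ tau w = k) ->
    forall t, lt_entry t (m i j) -> ~ has_ngon inc (residue_ij tau inc X i j) t.

Definition propD (I V : Type) (m : I -> I -> entry) (tau : V -> I)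
    (inc : V -> V -> Prop) : Prop :=
  forall i j, ge_entry (m i j) 4 ->
    ~ has_ngon inc (fun v => tau v = i \/ tau v = j) 2.

(* The extended geometry on option V, with None the new element x of type i. *)
Definition ext_type (I V : Type) (tau : V -> I) (i : I) (u : option V) : I :=
  match u with Some v => tau v | None => i end.

Definition ext_inc (I V : Type) (m : I -> I -> entry) (tau : V -> I)
    (inc : V -> V -> Prop) (X : V -> Prop) (i : I) (u w : option V) : Prop :=
  match u, w with
  | Some a, Some b => inc a b
  | None, None => True
  | None, Some v | Some v, None => X v \/ (tau v <> i /\ ~ adjacent m i (tau v))
  end.

Definition ext_flag (V : Type) (X : V -> Prop) (u : option V) : Prop :=
  match u with Some v => X v | None => True end.

(* Main.v *)
Require Import Defs.
From Stdlib Require Import Arith Lia Classical.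

Lemma adj_sym (I : Type) (m : I -> I -> entry) a b :
  coxeter_diagram m -> adjacent m a b -> adjacent m b a.
Proof.
  intros [_ [Hs _]] [H1 H2]. split; [congruence|]. rewrite Hs. exact H2.
Qed.

Lemma ext_geom (I V : Type) (m : I -> I -> entry) (tau : V -> I)
    (inc : V -> V -> Prop) (X : V -> Prop) (i : I) :
  geometry tau inc -> (forall v, X v -> tau v <> i) ->
  geometry (ext_type tau i) (ext_inc m tau inc X i).
Proof.
  intros [Hsym Ht] HX. split.
  - intros [u|] [w|]; simpl; auto.
  - intros [u|] [w|]; simpl; intro H.
    + split; intro H1.
      * f_equal. apply (Ht u w H). exact H1.
      * injection H1; intro; apply (Ht u w H); auto.
    + split; [intros [Hx|[Hn _]]; exfalso; [apply (HX u Hx H)|apply Hn, H]|discriminate].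
    + split; [intros [Hx|[Hn _]]; exfalso; [apply (HX w Hx); auto|apply Hn; auto]|discriminate].
    + split; auto.
Qed.

Lemma two_same (T J : Type) (tau' : T -> J) (inc' : T -> T -> Prop) t (f : nat -> T) j k c :
  geometry tau' inc' -> 2 <= t ->
  (forall a b, a < 2 * t -> b < 2 * t -> f a = f b -> a = b) ->
  (forall a, a < 2 * t -> tau' (f a) = j \/ tau' (f a) = k) ->
  (forall a, a < 2 * t -> inc' (f a) (f ((a + 1) mod (2 * t)))) ->
  (c = j \/ c = k) ->
  exists a b, a < 2 * t /\ b < 2 * t /\ a <> b /\ tau' (f a) = c /\ tau' (f b) = c.
Proof.
  intros [_ Hg] Ht Hinj HT Hinc Hc.
  assert (Hd : forall a, a + 1 < 2 * t -> tau' (f a) <> tau' (f (a+1))).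
  { intros a Ha He. apply Hg in He. assert (H := Hinc a ltac:(lia)).
    rewrite Nat.mod_small in H by lia. apply He in H. apply Hinj in H; lia. }
  assert (H0 := Hd 0 ltac:(lia)). assert (H1 := Hd 1 ltac:(lia)).
  assert (H2 := Hd 2 ltac:(lia)). simpl in *.
  destruct (HT 0 ltac:(lia)); destruct (HT 1 ltac:(lia));
  destruct (HT 2 ltac:(lia)); destruct (HT 3 ltac:(lia)); destruct Hc;
  first [ exists 0, 2; repeat split; (lia || congruence)
        | exists 1, 3; repeat split; (lia || congruence)
        | exfalso; congruence ].
Qed.

Lemma neighbors t p : 2 <= t -> p < 2 * t ->
  exists a b, a < 2 * t /\ b < 2 * t /\ a <> b /\ a <> p /\ b <> p /\
    (a + 1) mod (2 * t) = p /\ (p + 1) mod (2 * t) = b.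
Proof.
  intros Ht Hp.
  destruct (Nat.eq_dec p 0) as [E|E].
  - subst. exists (2*t-1), 1. repeat split; try lia.
    + replace (2*t-1+1) with (2*t) by lia. apply Nat.mod_same. lia.
    + apply Nat.mod_small. lia.
  - destruct (Nat.eq_dec (p+1) (2*t)) as [F|F].
    + exists (p-1), 0. repeat split; try lia.
      * rewrite Nat.mod_small; lia.
      * rewrite F. apply Nat.mod_same. lia.
    + exists (p-1), (p+1). repeat split; try lia.
      * rewrite Nat.mod_small; lia.
      * rewrite Nat.mod_small; lia.
Qed.

Section S.
Variables (I V : Type) (m : I -> I -> entry) (tau : V -> I)
    (inc : V -> V -> Prop) (X : V -> Prop) (i : I).
Hypothesis Hg : geometry tau inc.
Hypothesis HfX : flag inc X.
Hypothesis HX : forall v, X v -> tau v <> i.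

Lemma core va vb c : va <> vb -> tau va = c -> tau vb = c -> adjacent m i c ->
  ext_inc m tau inc X i (Some va) None -> ext_inc m tau inc X i (Some vb) None -> False.
Proof.
  intros Hne Ha Hb Hadj. simpl. intros [Xa|[_ Na]]; [|rewrite Ha in Na; tauto].
  intros [Xb|[_ Nb]]; [|rewrite Hb in Nb; tauto].
  apply Hne. apply (proj2 Hg va vb); [congruence|]. apply HfX; auto.
Qed.

Lemma none_pos t (f : nat -> option V) p k0 :
  2 <= t ->
  (forall a b, a < 2 * t -> b < 2 * t -> f a = f b -> a = b) ->
  (forall a, a < 2 * t -> ext_inc m tau inc X i (f a) (f ((a + 1) mod (2 * t)))) ->
  p < 2 * t -> f p = None ->
  (forall a, a < 2 * t -> ext_type tau i (f a) = i \/ ext_type tau i (f a) = k0) ->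
  adjacent m i k0 -> False.
Proof.
  intros Ht Hinj Hinc Hp Hn HT Hadj.
  destruct (neighbors t p Ht Hp) as [a [b [Ha [Hb [Hab [Hap [Hbp [E1 E2]]]]]]]].
  assert (Ia := Hinc a Ha). rewrite E1, Hn in Ia.
  assert (Ib := Hinc p Hp). rewrite E2, Hn in Ib.
  destruct (f a) as [va|] eqn:Fa; [|exfalso; apply Hap, Hinj; congruence].
  destruct (f b) as [vb|] eqn:Fb; [|exfalso; apply Hbp, Hinj; congruence].
  assert (Ta : tau va = k0).
  { destruct (HT a Ha) as [T|T]; rewrite Fa in T; simpl in T; auto.
    exfalso. simpl in Ia. destruct Ia as [Xa|[Na _]]; [apply (HX va Xa T)|tauto]. }
  assert (Tb : tau vb = k0).
  { destruct (HT b Hb) as [T|T]; rewrite Fb in T; simpl in T; auto.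
    exfalso. simpl in Ib. destruct Ib as [Xb|[Nb _]]; [apply (HX vb Xb T)|tauto]. }
  apply (core va vb k0); auto.
  intro E; subst. apply Hab, Hinj; congruence.
Qed.

Lemma transfer (S : option V -> Prop) (S' : V -> Prop) t (f : nat -> option V) :
  (forall v, S (Some v) -> S' v) -> 2 <= t ->
  (forall a b, a < 2 * t -> b < 2 * t -> f a = f b -> a = b) ->
  (forall a, a < 2 * t -> S (f a)) ->
  (forall a, a < 2 * t -> ext_inc m tau inc X i (f a) (f ((a + 1) mod (2 * t)))) ->
  (forall a, a < 2 * t -> f a <> None) ->
  has_ngon inc S' t.
Proof.
  intros HSS Ht Hinj HS Hinc Hnn.
  destruct (f 0) as [v0|] eqn:F0; [|exfalso; apply (Hnn 0); auto; lia].
  set (g := fun a => match f a with Some v => v | None => v0 end).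
  assert (Hfg : forall a, a < 2 * t -> f a = Some (g a)).
  { intros a Ha. unfold g. destruct (f a) eqn:E; auto. exfalso; apply (Hnn a); auto. }
  split; auto. exists g. split; [|split].
  - intros a b Ha Hb E. apply Hinj; auto. rewrite (Hfg a Ha), (Hfg b Hb), E; auto.
  - intros a Ha. apply HSS. rewrite <- Hfg; auto.
  - intros a Ha. assert (H := Hinc a Ha).
    rewrite (Hfg a Ha), (Hfg ((a+1) mod (2*t))) in H; auto.
    apply Nat.mod_upper_bound. lia.
Qed.

End S.

Theorem mainTheorem2 (I V : Type) (m : I -> I -> entry) (tau : V -> I)
    (inc : V -> V -> Prop) (X : V -> Prop) (i : I) :
  coxeter_diagram m -> no_A3 m ->
  geometry tau inc ->
  propF m tau inc -> propP m tau inc -> propD m tau inc ->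
  flag inc X -> (forall v, X v -> tau v <> i) ->
  geometry (ext_type tau i) (ext_inc m tau inc X i) /\
  propF m (ext_type tau i) (ext_inc m tau inc X i) /\
  propP m (ext_type tau i) (ext_inc m tau inc X i) /\
  propD m (ext_type tau i) (ext_inc m tau inc X i) /\
  flag (ext_inc m tau inc X i) (ext_flag X).
Proof.
  intros Hcox _ Hg HF HP HD HfX HX.
  assert (Hg' := ext_geom _ _ m tau inc X i Hg HX).
  split; [exact Hg'|]. split; [|split; [|split]].
  -
    intros [u|] [w|]; simpl; intros H1 H2; auto;
    try (right; split; auto; intro A; apply H2; apply adj_sym; auto; fail);
    exfalso; auto.
  -
    intros j k Y Hadj HfY HtY Hcov t Hlt [Ht [f [Hinj [HS Hinc]]]].
    assert (HT : forall a, a < 2 * t -> ext_type tau i (f a) = j \/ ext_type tau i (f a) = k).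
    { intros a Ha. apply (HS a Ha). }
    destruct (classic (Y None)) as [YN|YN].
    + assert (Hnn : forall a, a < 2 * t -> f a <> None).
      { intros a Ha E. destruct (HS a Ha) as [H _]. rewrite E in H. auto. }
      refine (HP j k (fun v => Y (Some v)) Hadj _ _ _ t Hlt _).
      * intros u v; apply (HfY (Some u) (Some v)).
      * intros w Hw; apply (HtY (Some w) Hw).
      * intros k' H1 H2 H3. destruct (Hcov k' H1 H2 H3) as [[w|] [Hw Htw]].
        -- exists w; auto.
        -- exfalso. simpl in Htw. subst k'.
           assert (Hc : exists c, (c = j \/ c = k) /\ adjacent m i c).
           { destruct H3 as [A|A]; [exists j|exists k]; split; auto; apply adj_sym; auto. }
           destruct Hc as [c [Hc Hac]].
           destruct (two_same _ _ _ _ _ _ _ _ _ Hg' Ht Hinj HT Hinc Hc) as [a [b [Ha [Hb [Hab [Ta Tb]]]]]].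
           destruct (f a) as [va|] eqn:Fa; [|exact (Hnn a Ha Fa)].
           destruct (f b) as [vb|] eqn:Fb; [|exact (Hnn b Hb Fb)].
           eapply core with (va:=va) (vb:=vb) (c:=c); eauto.
           ++ intro E; subst. apply Hab, Hinj; congruence.
           ++ destruct (HS a Ha) as [_ [H _]]. rewrite Fa in H. apply H; auto.
           ++ destruct (HS b Hb) as [_ [H _]]. rewrite Fb in H. apply H; auto.
      * eapply transfer with (S := residue_ij (ext_type tau i) (ext_inc m tau inc X i) Y j k)
                 (f := f); eauto.
        intros v [H1 [H2 H3]]. split; [auto|split; [|auto]].
        intros w Hw. apply (H2 (Some w) Hw).
    + assert (Hnn : forall a, a < 2 * t -> f a <> None).
      { intros a Ha E.
        assert (Hc : exists k0, (forall b, b < 2 * t -> ext_type tau i (f b) = i \/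
                                   ext_type tau i (f b) = k0) /\ adjacent m i k0).
        { destruct (HT a Ha) as [T|T]; rewrite E in T; simpl in T; subst.
          - exists k; split; auto.
          - exists j; split; [intros b Hb; destruct (HT b Hb); auto | apply (adj_sym _ m j k Hcox Hadj)]. }
        destruct Hc as [k0 [Hk0 Hadj0]].
        eapply none_pos with (f:=f) (p:=a) (k0:=k0); eauto. }
      refine (HP j k (fun v => Y (Some v)) Hadj _ _ _ t Hlt _).
      * intros u v; apply (HfY (Some u) (Some v)).
      * intros w Hw; apply (HtY (Some w) Hw).
      * intros k' H1 H2 H3. destruct (Hcov k' H1 H2 H3) as [[w|] [Hw Htw]].
        -- exists w; auto.
        -- contradiction.
      * eapply transfer with (S := residue_ij (ext_type tau i) (ext_inc m tau inc X i) Y j k)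
                 (f := f); eauto.
        intros v [H1 [H2 H3]]. split; [auto|split; [|auto]].
        intros w Hw. apply (H2 (Some w) Hw).
  -
    intros j k Hjk Hng.
    assert (Hng' := Hng). destruct Hng' as [Ht [f [Hinj [HS Hinc]]]].
    assert (Hnn : forall a, a < 2 * 2 -> f a <> None).
    { intros a Ha E.
      assert (Hjk3 : forall x y, ge_entry (m x y) 4 -> x <> y -> adjacent m x y).
      { intros x y G N. split; auto. destruct (m x y); simpl in *; auto; lia. }
      assert (Hne : j <> k).
      { intro; subst. destruct Hcox as [H1 _]. rewrite H1 in Hjk. simpl in Hjk. lia. }
      assert (Hc : exists k0, (forall b, b < 2 * 2 -> ext_type tau i (f b) = i \/
                                 ext_type tau i (f b) = k0) /\ adjacent m i k0).
      { destruct (HS a Ha) as [T|T]; rewrite E in T; simpl in T; subst.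
        - exists k; split; auto.
        - exists j; split.
          + intros b Hb; destruct (HS b Hb); auto.
          + apply Hjk3; auto. destruct Hcox as [_ [Hs _]]. rewrite Hs; auto. }
      destruct Hc as [k0 [Hk0 Hadj0]].
      eapply none_pos with (t:=2) (f:=f) (p:=a) (k0:=k0); eauto. }
    apply (HD j k Hjk).
    eapply transfer with (S := fun v => ext_type tau i v = j \/ ext_type tau i v = k)
                 (f := f); eauto.
  -
    intros [u|] [w|]; simpl; auto.
Qed.
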